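(* Let $Q\succeq0$, $q\in\mathbb{R}^n$, $A\succ0$, $v\in\mathbb{R}^n$, and let $m>0$ satisfy Requirement 2 (see context). Let $k\in\mathbb{N}$ and $0<\gamma_k\le 1/L_k$. If $x_k\in\mathcal{C}$, then $x_{k+1}:=x_k-\gamma_k\nabla J_k(x_k)\in\mathcal{C}$. That is, $\mathcal{C}$ is positively invariant under the gradient step.
   Context: $Q\in\mathbb{R}^{n\times n}$ symmetric positive semidefinite, $A\in\mathbb{R}^{n\times n}$ symmetric positive definite. $f(x)=\tfrac12 x^\top Qx+q^\top x$, $g(x)=(x-v)^\top A(x-v)$, $\mathcal{C}=\{x:g(x)\le1\}$, $\partial\mathcal{C}=\{x:g(x)=1\}$, $J_k(x)=f(x)+\frac{m}{k}g(x)^k$ for $k\in\mathbb{N}=\{1,2,\dots\}$, $L_k=\bar\sigma(Q+m(4k-2)A)$ (in particular $L_1=\bar\sigma(Q+2mA)$), where $\bar\sigma,\underline\sigma$ denote largest/smallest singular value. Let $r=\sqrt{\underline\sigma(A)}/\bar\sigma(A)$. Requirement 2: with $w(x)=\nabla f(x)+m\nabla g(x)$, for every $x\in\partial\mathcal{C}$ one has $\|w(x)\|\le 2rL_1\cos\phi(x)$, where $\cos\phi(x)=\frac{\langle w(x),\nabla g(x)\rangle}{\|w(x)\|\,\|\nabla g(x)\|}$ (equivalently, $\|w(x)\|^2\|\nabla g(x)\|\le 2rL_1\langle w(x),\nabla g(x)\rangle$ for all $x\in\partial\mathcal{C}$, which also covers $w(x)=0$). (The paper phrases this as $m\ge m_{\mathrm{inv}}$,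 the smallest $m\ge0$ satisfying this condition.) Requirement 2 implies $\langle\nabla g(x),w(x)\rangle\ge0$ on $\partial\mathcal{C}$. *)

(* Defs.v *)
From HB Require Import structures.
From mathcomp Require Import all_boot all_order all_algebra.
From mathcomp Require Import all_classical all_reals.
Set Implicit Arguments. Unset Strict Implicit. Unset Printing Implicit Defensive.
Import Order.TTheory GRing.Theory Num.Theory.
Local Open Scope ring_scope.
Local Open Scope classical_set_scope.

Section Defs.
Variables (R : realType) (n : nat).

Definition dot (x y : 'cV[R]_n) : R := (x^T *m y) 0 0.
Definition vnorm (x : 'cV[R]_n) : R := Num.sqrt (dot x x).

Definition is_symmetric (M : 'M[R]_n) : Prop := M^T = M.
Definition psdmx (M : 'M[R]_n) : Prop := forall x : 'cV[R]_n, 0 <= dot x (M *m x).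
Definition pdmx (M : 'M[R]_n) : Prop :=
  forall x : 'cV[R]_n, x != 0 -> 0 < dot x (M *m x).

Definition sigma_max (M : 'M[R]_n) : R :=
  Num.sqrt (sup [set s : R | eigenvalue (M^T *m M) s]).
Definition sigma_min (M : 'M[R]_n) : R :=
  Num.sqrt (inf [set s : R | eigenvalue (M^T *m M) s]).

Definition ffun (Q : 'M[R]_n) (q x : 'cV[R]_n) : R :=
  2^-1 * dot x (Q *m x) + dot q x.
Definition gfun (A : 'M[R]_n) (v x : 'cV[R]_n) : R := dot (x - v) (A *m (x - v)).
Definition Jfun (Q A : 'M[R]_n) (q v : 'cV[R]_n) (m : R) (k : nat) (x : 'cV[R]_n) : R :=
  ffun Q q x + m / k%:R * gfun A v x ^+ k.

(* gradients (closed forms, valid for symmetric Q and A) *)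
Definition gradf (Q : 'M[R]_n) (q x : 'cV[R]_n) : 'cV[R]_n := Q *m x + q.
Definition gradg (A : 'M[R]_n) (v x : 'cV[R]_n) : 'cV[R]_n := 2 *: (A *m (x - v)).
Definition gradJ (Q A : 'M[R]_n) (q v : 'cV[R]_n) (m : R) (k : nat) (x : 'cV[R]_n)
  : 'cV[R]_n :=
  gradf Q q x + (m * gfun A v x ^+ k.-1) *: gradg A v x.

Definition inC (A : 'M[R]_n) (v x : 'cV[R]_n) : Prop := gfun A v x <= 1.

Definition Lk (Q A : 'M[R]_n) (m : R) (k : nat) : R :=
  sigma_max (Q + (m * (4 * k%:R - 2)) *: A).

Definition rA (A : 'M[R]_n) : R := Num.sqrt (sigma_min A) / sigma_max A.

Definition requirement2 (Q A : 'M[R]_n) (q v : 'cV[R]_n) (m : R) : Prop :=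
  forall x : 'cV[R]_n, gfun A v x = 1 ->
    let w := gradf Q q x + m *: gradg A v x in
    vnorm w ^+ 2 * vnorm (gradg A v x)
      <= 2 * rA A * Lk Q A m 1 * dot w (gradg A v x).

End Defs.

(* Main.v *)
Require Import Defs.
From HB Require Import structures.
From mathcomp Require Import all_boot all_order all_algebra.
From mathcomp Require Import all_classical all_reals.
From mathcomp Require Import complex.
From mathcomp Require Import ring lra.
Import Order.TTheory GRing.Theory Num.Theory.
Local Open Scope ring_scope.

Section DotLemmas.
Variables (R : realType) (n : nat).
Implicit Types (x y z : 'cV[R]_n) (M : 'M[R]_n).

Lemma dotE x y : dot x y = \sum_i x i 0 * y i 0.
Proof. by rewrite /dot mxE; apply: eq_bigr => i _; rewrite mxE. Qed.

Lemma dotC x y : dot x y = dot y x.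
Proof. by rewrite !dotE; apply: eq_bigr => i _; rewrite mulrC. Qed.

Lemma dotDl x y z : dot (x + y) z = dot x z + dot y z.
Proof. by rewrite !dotE -big_split; apply: eq_bigr => i _; rewrite mxE mulrDl. Qed.
Lemma dotDr x y z : dot z (x + y) = dot z x + dot z y.
Proof. by rewrite ![dot z _]dotC dotDl. Qed.
Lemma dotZl a x y : dot (a *: x) y = a * dot x y.
Proof. by rewrite !dotE mulr_sumr; apply: eq_bigr => i _; rewrite mxE mulrA. Qed.
Lemma dotZr a x y : dot y (a *: x) = a * dot y x.
Proof. by rewrite ![dot y _]dotC dotZl. Qed.
Lemma dotNl x y : dot (- x) y = - dot x y.
Proof. by rewrite -scaleN1r dotZl mulN1r. Qed.
Lemma dotNr x y : dot y (- x) = - dot y x.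
Proof. by rewrite ![dot y _]dotC dotNl. Qed.
Lemma dotBl x y z : dot (x - y) z = dot x z - dot y z.
Proof. by rewrite dotDl dotNl. Qed.
Lemma dotBr x y z : dot z (x - y) = dot z x - dot z y.
Proof. by rewrite dotDr dotNr. Qed.
Lemma dot0l x : dot 0 x = 0.
Proof. by rewrite dotE big1 // => i _; rewrite mxE mul0r. Qed.
Lemma dot0r x : dot x 0 = 0.
Proof. by rewrite dotC dot0l. Qed.
Lemma dot_ge0 x : 0 <= dot x x.
Proof. by rewrite dotE sumr_ge0 // => i _; rewrite -expr2 sqr_ge0. Qed.
Lemma dot_eq0 x : (dot x x == 0) = (x == 0).
Proof.
apply/idP/eqP => [|->]; last by rewrite dot0l.
rewrite dotE psumr_eq0 => [/allP H|i _]; last by rewrite -expr2 sqr_ge0.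
apply/matrixP => i j; rewrite ord1 mxE.
by have := H i (mem_index_enum _); rewrite -expr2 sqrf_eq0 => /eqP.
Qed.
Lemma dot_mul x M y : dot x (M *m y) = dot (M^T *m x) y.
Proof. by rewrite /dot trmx_mul trmxK mulmxA. Qed.
Lemma dot_sym x M y : M^T = M -> dot x (M *m y) = dot y (M *m x).
Proof. by move=> sM; rewrite dot_mul sM dotC. Qed.
Lemma vnorm_sq x : vnorm x ^+ 2 = dot x x.
Proof. by rewrite /vnorm sqr_sqrtr // dot_ge0. Qed.
Lemma vnorm_ge0 x : 0 <= vnorm x.
Proof. exact: sqrtr_ge0. Qed.
End DotLemmas.
Arguments dotE {R n}.
Arguments dotC {R n}.
Arguments dotDl {R n}.
Arguments dotDr {R n}.
Arguments dotZl {R n}.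
Arguments dotZr {R n}.
Arguments dotNl {R n}.
Arguments dotNr {R n}.
Arguments dotBl {R n}.
Arguments dotBr {R n}.
Arguments dot0l {R n}.
Arguments dot0r {R n}.
Arguments dot_ge0 {R n}.
Arguments dot_eq0 {R n}.
Arguments dot_mul {R n}.
Arguments dot_sym {R n}.
Arguments vnorm_sq {R n}.
Arguments vnorm_ge0 {R n}.

Lemma pow_lemma (R : realType) (a b : R) (N : nat) : 0 <= a <= 1 -> 0 <= b <= 1 ->
  (a - b) * (a ^+ N - b ^+ N) <= N%:R * (a - b) ^+ 2.
Proof.
move=> /andP[a0 a1] /andP[b0 b1].
rewrite subrXX mulrA -expr2 mulrC ler_wpM2r ?sqr_ge0 //.
rewrite -[N in N%:R]card_ord -sumr_const ler_sum // => i _.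
by rewrite mulr_ile1 ?exprn_ge0 ?exprn_ile1.
Qed.

Lemma scalar_lemma (R : realType) (al be c : R) (K : nat) :
  0 <= al <= 1 -> 0 <= be <= 1 -> c ^+ 2 <= al * be ->
  be ^+ K.+1 + al ^+ K.+1 - c * (be ^+ K + al ^+ K)
    <= (2 * K%:R + 1) * (al + be - 2 * c).
Proof.
move=> /andP[a0 a1] /andP[b0 b1] hc.
set a := Num.sqrt al; set b := Num.sqrt be.
have ha : a ^+ 2 = al by rewrite sqr_sqrtr.
have hb : b ^+ 2 = be by rewrite sqr_sqrtr.
have a0' : 0 <= a by apply: sqrtr_ge0.
have b0' : 0 <= b by apply: sqrtr_ge0.
have a1' : a <= 1 by rewrite -sqrtr1 ler_sqrt.
have b1' : b <= 1 by rewrite -sqrtr1 ler_sqrt.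
have cab : c <= a * b.
  have : c ^+ 2 <= (a * b) ^+ 2 by rewrite exprMn ha hb.
  move=> h; have := ler_norm c; move: h; rewrite -ler_sqrt ?sqr_ge0 // !sqrtr_sqr.
  by move=> h1 h2; apply: (le_trans h2); apply: (le_trans h1); rewrite ger0_norm ?mulr_ge0.
have aK : al ^+ K <= 1 by rewrite exprn_ile1.
have bK : be ^+ K <= 1 by rewrite exprn_ile1.
have coef : 0 <= 2 * (2 * K%:R + 1) - (be ^+ K + al ^+ K).
  have : 0 <= K%:R :> R by [].
  lra.
have step : be ^+ K.+1 + al ^+ K.+1 - c * (be ^+ K + al ^+ K) - (2 * K%:R + 1) * (al + be - 2 * c)
   <= be ^+ K.+1 + al ^+ K.+1 - a * b * (be ^+ K + al ^+ K) - (2 * K%:R + 1) * (al + be - 2 * (a * b)).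
  have : c * (2 * (2 * K%:R + 1) - (be ^+ K + al ^+ K)) <= a * b * (2 * (2 * K%:R + 1) - (be ^+ K + al ^+ K)).
    by rewrite ler_wpM2r.
  lra.
have key := @pow_lemma R a b (2 * K).+1.
have : (a - b) * (a ^+ (2 * K).+1 - b ^+ (2 * K).+1) <= ((2 * K).+1)%:R * (a - b) ^+ 2.
  by apply: key; apply/andP.
move=> hk.
have e1 : be ^+ K.+1 + al ^+ K.+1 - a * b * (be ^+ K + al ^+ K) - (2 * K%:R + 1) * (al + be - 2 * (a * b))
  = (a - b) * (a ^+ (2 * K).+1 - b ^+ (2 * K).+1) - ((2 * K).+1)%:R * (a - b) ^+ 2.
  have -> : ((2 * K).+1)%:R = 2 * K%:R + 1 :> R by rewrite -addn1 natrD natrM.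
  have e2 : forall t : R, t ^+ (2 * K).+1 = t * (t ^+ K) ^+ 2.
    by move=> t; rewrite exprS -exprM mulnC.
  have e3 : forall t : R, (t ^+ 2) ^+ K = (t ^+ K) ^+ 2.
    by move=> t; rewrite -!exprM mulnC.
  rewrite !e2 -ha -hb (exprS (a ^+ 2)) (exprS (b ^+ 2)) !e3; ring.
lra.
Qed.
Section CX.
Variable R : realType.
Local Notation rc := (real_complex R).

Lemma rc_real (k : R) : rc k \is Num.real.
Proof.
rewrite realE; have [h|h] := leP 0 k.
  by rewrite -[0 : R[i]]/(rc 0) lecR h.
by apply/orP; right; rewrite -[0 : R[i]]/(rc 0) lecR ltW.
Qed.

Lemma realC_eq (z : R[i]) : z \is Num.real -> z = rc (complex.Re z).
Proof.
case: z => a b; rewrite realE => /orP[h|h].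
  by have := ger0_Im h => /= ->.
have : 0 <= - (Complex a b) by rewrite oppr_ge0.
by move=> /ger0_Im /= /eqP; rewrite oppr_eq0 => /eqP ->.
Qed.
End CX.

Section Spec.
Variables (R : realType) (n : nat).
Local Notation rc := (real_complex R).
Local Open Scope sesquilinear_scope.

Lemma quad_diag (U : 'M[R[i]]_n) (e : 'rV[R[i]]_n) (z : 'cV[R[i]]_n) :
  (z^t* *m U^t* *m diag_mx e *m U *m z) 0 0 =
  \sum_i e 0 i * (((U *m z) i 0)^* * (U *m z) i 0).
Proof.
have -> : z^t* *m U^t* = (U *m z)^t* by rewrite trmx_mul map_mxM.
rewrite -mulmxA mxE; apply: eq_bigr => i _.
by rewrite mul_mx_diag !mxE mulrCA mulrA.
Qed.

Lemma realmx_conj (h : 'cV[R]_n) : (map_mx rc h)^T = (map_mx rc h)^t*.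
Proof. by apply/matrixP => i j; rewrite !mxE conj_Creal ?rc_real. Qed.

Lemma rc_dot (h k : 'cV[R]_n) : rc (dot h k) = ((map_mx rc h)^t* *m (map_mx rc k)) 0 0.
Proof.
by rewrite -realmx_conj map_trmx -map_mxM /dot [RHS]mxE.
Qed.

Lemma spec_decomp (M : 'M[R]_n) : M^T = M ->
 exists (d : 'I_n -> R) (om : 'cV[R]_n -> 'I_n -> R),
  [/\ (forall h i, 0 <= om h i),
      (forall h, dot h h = \sum_i om h i),
      (forall h, dot h (M *m h) = \sum_i d i * om h i),
      (forall h, dot (M *m h) (M *m h) = \sum_i d i ^+ 2 * om h i) &
      (forall i, eigenvalue M (d i))].
Proof.
move=> sM; set Mc := map_mx rc M.
have herm : Mc \is hermsymmx.
  apply/is_hermitianmxP; rewrite expr0 scale1r; apply/matrixP => i j.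
  by rewrite !mxE conj_Creal ?rc_real // -{1}sM mxE.
have /orthomx_spectralP Mdec := hermitian_normalmx herm.
set U := spectralmx Mc in Mdec; set D := spectral_diag Mc in Mdec.
have Uu : U \is unitarymx := spectral_unitarymx Mc.
have Dreal : D \is a realmx := hermitian_spectral_diag_real herm.
have UUt : U *m U^t* = 1%:M by apply/unitarymxP.
have UtU : U^t* *m U = 1%:M by apply: mulmx1C.
rewrite invmx_unitary // in Mdec.
pose d i := complex.Re (D 0 i).
have Dd i : D 0 i = rc (d i) by apply: realC_eq; apply: (mxOverP Dreal).
pose xi (h : 'cV[R]_n) := U *m (map_mx rc h).
pose om h i := complex.Re (((xi h) i 0)^* * (xi h) i 0).
have omE h i : ((xi h) i 0)^* * (xi h) i 0 = rc (om h i).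
  apply: realC_eq; apply: ger0_real; rewrite mulrC; exact: mul_conjC_ge0.
have gen h (e : 'rV[R[i]]_n) (f : 'I_n -> R) :
    (forall i, e 0 i = rc (f i)) ->
    ((map_mx rc h)^t* *m U^t* *m diag_mx e *m U *m (map_mx rc h)) 0 0 = rc (\sum_i f i * om h i).
  move=> ef; rewrite quad_diag rmorph_sum; apply: eq_bigr => i _.
  by rewrite ef omE rmorphM.
exists d, om; split.
- move=> h i; rewrite -(@lecR R) -omE /=; rewrite mulrC; exact: mul_conjC_ge0.
- move=> h; apply: (@complexI R); rewrite rc_dot.
  have := gen h (const_mx 1) (fun _ => 1) (fun i => ltac:(by rewrite mxE)).
  rewrite diag_const_mx mulmx1 -(mulmxA _ (U^t*) U) UtU mulmx1 => ->.
  by congr rc; apply: eq_bigr => i _; rewrite mul1r.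
- move=> h; apply: (@complexI R); rewrite rc_dot map_mxM -/Mc Mdec.
  by rewrite -(gen h D d Dd) !mulmxA.
- move=> h; apply: (@complexI R); rewrite dot_mul dotC sM rc_dot !map_mxM -/Mc Mdec.
  rewrite -(gen h (\row_j (D 0 j * D 0 j)) (fun i => d i ^+ 2)); last first.
    by move=> i; rewrite mxE Dd -rmorphM expr2.
  have XX : U^t* *m diag_mx D *m U *m (U^t* *m diag_mx D *m U)
       = U^t* *m (diag_mx D *m diag_mx D) *m U.
    by rewrite !mulmxA -(mulmxA _ U) UUt mulmx1.
  by rewrite (mulmxA (U^t* *m _ *m _)) XX mulmx_diag !mulmxA.
- move=> i; rewrite -(eigenvalue_map rc) -/Mc.
  suff E : eigenvalue Mc (D 0 i) by move: E; rewrite Dd.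
  apply/eigenvalueP.
  exists (delta_mx 0 i *m U).
    rewrite Mdec !mulmxA -(mulmxA _ U) UUt mulmx1.
    rewrite scalemxAl. congr (_ *m _). apply/matrixP => a b; rewrite mul_mx_diag !mxE.
    by case: (eqVneq b i) => [->|nb]; rewrite ?andbF ?mul0r ?mulr0 // mulrC.
  apply/negP => /eqP H; have := congr1 (mulmx^~ (U^t*)) H.
  rewrite -mulmxA UUt mulmx1 mul0mx => /matrixP /(_ 0 i); rewrite !mxE !eqxx /=.
  by move/eqP; rewrite oner_eq0.
Qed.
End Spec.
Arguments spec_decomp {R n M}.

Section Sigma.
Variables (R : realType) (n : nat).
Local Open Scope classical_set_scope.

Lemma eig_row_col (M : 'M[R]_n) a : M^T = M -> eigenvalue M a ->
  exists h : 'cV[R]_n, 0 < dot h h /\ M *m h = a *: h.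
Proof.
move=> sM /eigenvalueP [v Hv v0]; exists v^T; split.
  by rewrite lt_def dot_ge0 dot_eq0 andbT trmx_eq0.
by rewrite -{1}sM -trmx_mul Hv linearZ.
Qed.

Arguments eig_row_col {M a}.

Lemma eigS_prop (M : 'M[R]_n) s : M^T = M -> eigenvalue (M^T *m M) s ->
  exists h : 'cV[R]_n, 0 < dot h h /\ dot (M *m h) (M *m h) = s * dot h h.
Proof.
move=> sM E; have sMM : (M^T *m M)^T = M^T *m M by rewrite trmx_mul trmxK.
have [h [h0 Hh]] := eig_row_col sMM E; exists h; split => //.
by rewrite dot_mul mulmxA Hh dotZl.
Qed.

Arguments eigS_prop {M s}.

Lemma d_eigS (M : 'M[R]_n) a : M^T = M -> eigenvalue M a ->
  eigenvalue (M^T *m M) (a ^+ 2).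
Proof.
move=> sM /eigenvalueP [v Hv v0]; apply/eigenvalueP; exists v => //.
by rewrite sM mulmxA Hv -scalemxAl Hv scalerA expr2.
Qed.

Arguments d_eigS {M a}.

Lemma S_bound (M : 'M[R]_n) (d : 'I_n -> R) (om : 'cV[R]_n -> 'I_n -> R) s B :
  (forall h i, 0 <= om h i) ->
  (forall h, dot h h = \sum_i om h i) ->
  (forall h, dot (M *m h) (M *m h) = \sum_i d i ^+ 2 * om h i) ->
  M^T = M -> eigenvalue (M^T *m M) s ->
  (forall i, d i ^+ 2 <= B) -> s <= B.
Proof.
move=> om0 omS omM sM E dB; have [h [h0 Hh]] := eigS_prop sM E.
rewrite -(ler_pM2r h0) -Hh omM omS mulr_sumr ler_sum // => i _.
by rewrite ler_wpM2r.
Qed.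

Arguments S_bound {M d om s B}.

Lemma S_lbound (M : 'M[R]_n) (d : 'I_n -> R) (om : 'cV[R]_n -> 'I_n -> R) s B :
  (forall h i, 0 <= om h i) ->
  (forall h, dot h h = \sum_i om h i) ->
  (forall h, dot (M *m h) (M *m h) = \sum_i d i ^+ 2 * om h i) ->
  M^T = M -> eigenvalue (M^T *m M) s ->
  (forall i, B <= d i ^+ 2) -> B <= s.
Proof.
move=> om0 omS omM sM E dB; have [h [h0 Hh]] := eigS_prop sM E.
rewrite -(ler_pM2r h0) -Hh omM omS mulr_sumr ler_sum // => i _.
by rewrite ler_wpM2r.
Qed.

Arguments S_lbound {M d om s B}.

Lemma sigma_max_bound (M : 'M[R]_n) : M^T = M ->
  forall h, dot h (M *m h) <= sigma_max M * dot h h.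
Proof.
move=> sM h; have [d [om [om0 omS omQ omM deig]]] := spec_decomp sM.
set S := [set s : R | eigenvalue (M^T *m M) s].
have hS : has_ubound S.
  exists (\sum_j d j ^+ 2) => s Es; apply: (S_bound om0 omS omM sM Es) => i.
  by rewrite (bigD1 i) //= lerDl sumr_ge0 // => j _; rewrite sqr_ge0.
have di i : `|d i| <= sigma_max M.
  have sg : d i ^+ 2 <= sup S by apply: (ub_le_sup hS); exact: (d_eigS sM (deig i)).
  by rewrite /sigma_max -sqrtr_sqr ler_sqrt // (le_trans (sqr_ge0 _) sg).
rewrite omQ omS mulr_sumr ler_sum // => i _.
by rewrite ler_wpM2r // (le_trans (ler_norm _)).
Qed.

Lemma sigma_max_mono (M1 M2 : 'M[R]_n) : (0 < n)%N -> M1^T = M1 -> M2^T = M2 ->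
  psdmx M1 -> (forall h, dot h (M1 *m h) <= dot h (M2 *m h)) ->
  sigma_max M1 <= sigma_max M2.
Proof.
move=> n0 s1 s2 p1 le12; have [d [om [om0 omS omQ omM deig]]] := spec_decomp s1.
set S := [set s : R | eigenvalue (M1^T *m M1) s].
have s2ge0 : 0 <= sigma_max M2 by apply: sqrtr_ge0.
have dB i : d i ^+ 2 <= sigma_max M2 ^+ 2.
  have [h [h0 Hh]] := eig_row_col s1 (deig i).
  have d0 : 0 <= d i.
    have := p1 h; rewrite Hh dotZr => H.
    by rewrite -(pmulr_lge0 _ h0).
  have : d i * dot h h <= sigma_max M2 * dot h h.
    by rewrite -dotZr -Hh (le_trans (le12 h)) // sigma_max_bound.
  by rewrite ler_pM2r // => H; rewrite ler_pXn2r // nnegrE.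
rewrite /sigma_max -[X in _ <= X]/(sigma_max M2).
rewrite -(ger0_norm s2ge0) -sqrtr_sqr ler_sqrt ?sqr_ge0 //.
apply: ge_sup.
  by exists (d (Ordinal n0) ^+ 2); rewrite /= d_eigS.
by move=> s Es; apply: (S_bound om0 omS omM s1 Es).
Qed.

Lemma sigma_min_bound (M : 'M[R]_n) : M^T = M -> psdmx M ->
  forall h, sigma_min M * dot h (M *m h) <= dot (M *m h) (M *m h).
Proof.
move=> sM pM h; have [d [om [om0 omS omQ omM deig]]] := spec_decomp sM.
set S := [set s : R | eigenvalue (M^T *m M) s].
have hS : has_lbound S.
  exists 0 => s Es; apply: (S_lbound om0 omS omM sM Es) => i; exact: sqr_ge0.
have d0 i : 0 <= d i.
  have [k [k0 Hk]] := eig_row_col sM (deig i).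
  have := pM k; rewrite Hk dotZr => H.
  by rewrite -(pmulr_lge0 _ k0).
have di i : sigma_min M <= d i.
  have ig : inf S <= d i ^+ 2 by apply: (ge_inf hS); exact: (d_eigS sM (deig i)).
  rewrite /sigma_min -(ger0_norm (d0 i)) -sqrtr_sqr.
  case: (leP 0 (inf S)) => i0; first by rewrite ler_sqrt // sqr_ge0.
  by rewrite ltr0_sqrtr // sqrtr_ge0.
rewrite omQ omM mulr_sumr ler_sum // => i _.
by rewrite mulrA ler_wpM2r // expr2 ler_wpM2r.
Qed.

Lemma sigma_min_ge0 (M : 'M[R]_n) : 0 <= sigma_min M.
Proof. exact: sqrtr_ge0. Qed.
End Sigma.
Arguments sigma_max_bound {R n M}.
Arguments sigma_max_mono {R n M1 M2}.
Arguments sigma_min_bound {R n M}.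

Section Quad.
Variables (R : realType) (n : nat).

Lemma quad_expand (A : 'M[R]_n) (a b : R) (x y : 'cV[R]_n) : A^T = A ->
  dot (a *: x + b *: y) (A *m (a *: x + b *: y)) =
  a ^+ 2 * dot x (A *m x) + 2 * a * b * dot x (A *m y) + b ^+ 2 * dot y (A *m y).
Proof.
move=> sA; rewrite mulmxDr -!scalemxAr dotDl !dotDr !dotZl !dotZr (dot_sym y A x sA).
ring.
Qed.

Lemma pd_psd (A : 'M[R]_n) : pdmx A -> psdmx A.
Proof.
move=> pA x; have [->|x0] := eqVneq x 0; first by rewrite dot0l.
exact/ltW/pA.
Qed.

Lemma cs_A (A : 'M[R]_n) (a b : 'cV[R]_n) : A^T = A -> pdmx A ->
  dot a (A *m b) ^+ 2 <= dot a (A *m a) * dot b (A *m b).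
Proof.
move=> sA pA; have [->|b0] := eqVneq b 0.
  by rewrite mulmx0 dot0r dot0l expr0n /= mulr0.
have S0 := pA b b0.
set P := dot a (A *m a); set Rr := dot a (A *m b); set S := dot b (A *m b).
have := pd_psd _ pA (S *: a + (- Rr) *: b); rewrite quad_expand // -/P -/Rr -/S.
have -> : S ^+ 2 * P + 2 * S * - Rr * Rr + (- Rr) ^+ 2 * S = S * (S * P - Rr ^+ 2) by ring.
by rewrite pmulr_rge0 // subr_ge0 mulrC.
Qed.
End Quad.
Arguments pd_psd {R n A}.

Section Smooth.
Variables (R : realType) (n : nat).

Definition gJ (Q A : 'M[R]_n) (q v : 'cV[R]_n) (m : R) (K : nat) (y : 'cV[R]_n) :=
  Q *m (y + v) + q + (m * dot y (A *m y) ^+ K) *: (2 *: (A *m y)).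

Lemma gradJ_gJ Q A q v m K x : gradJ Q A q v m K.+1 x = gJ Q A q v m K (x - v).
Proof. by rewrite /gradJ /gJ /gradf /gradg /gfun subrK. Qed.

Lemma smooth Q A q v m K (yx yb : 'cV[R]_n) : Q^T = Q -> A^T = A -> pdmx A -> 0 < m ->
  dot yx (A *m yx) <= 1 -> dot yb (A *m yb) <= 1 ->
  dot (gJ Q A q v m K yb - gJ Q A q v m K yx) (yb - yx)
    <= Lk Q A m K.+1 * dot (yb - yx) (yb - yx).
Proof.
move=> sQ sA pA m0 gx1 gb1.
set gx := dot yx (A *m yx); set gb := dot yb (A *m yb); set c := dot yx (A *m yb).
have E1 : dot (gJ Q A q v m K yb - gJ Q A q v m K yx) (yb - yx) =
   dot (yb - yx) (Q *m (yb - yx)) + 2 * m * (gb ^+ K * (gb - c) - gx ^+ K * (c - gx)).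
  rewrite /gJ -/gx -/gb !(dotBl, dotDl, dotZl, dotBr, dotDr, dotZr, mulmxDr, mulmxBr, mulmxN, dotNr, dotNl).
  rewrite ![dot (Q *m _) _]dotC ![dot (A *m _) _]dotC (dot_sym yx Q yb sQ) (dot_sym yb A yx sA) -/c -/gx -/gb.
  ring.
have E2 : dot (yb - yx) ((Q + (m * (4 * K.+1%:R - 2)) *: A) *m (yb - yx)) =
    dot (yb - yx) (Q *m (yb - yx)) + (m * (4 * K.+1%:R - 2)) * (gx + gb - 2 * c).
  rewrite mulmxDl -scalemxAl dotDr dotZr; congr (_ + _ * _).
  rewrite !(dotBl, dotBr, mulmxBr) (dot_sym yb A yx sA) -/c -/gx -/gb; ring.
have CS : c ^+ 2 <= gx * gb by apply: cs_A.
have gx0 : 0 <= gx by apply: pd_psd.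
have gb0 : 0 <= gb by apply: pd_psd.
have SL := @scalar_lemma R gx gb c K ltac:(by rewrite gx0) ltac:(by rewrite gb0) CS.
have sM : (Q + (m * (4 * K.+1%:R - 2)) *: A)^T = Q + (m * (4 * K.+1%:R - 2)) *: A.
  by rewrite linearD linearZ /= sQ sA.
have bnd := sigma_max_bound sM (yb - yx).
rewrite E1; apply: le_trans bnd; rewrite E2.
have -> : m * (4 * K.+1%:R - 2) = 2 * m * (2 * K%:R + 1).
  rewrite -addn1 natrD; ring.
have H1 : gb ^+ K * (gb - c) - gx ^+ K * (c - gx) <= (2 * K%:R + 1) * (gx + gb - 2 * c).
  move: SL; rewrite !exprS; lra.
have m2 : 0 <= 2 * m by lra.
have := ler_wpM2l m2 H1; lra.
Qed.
End Smooth.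
Arguments gJ {R n}.

Section Boundary.
Variables (R : realType) (n : nat).

Lemma Lk_mono (Q A : 'M[R]_n) m K : (0 < n)%N -> Q^T = Q -> psdmx Q -> A^T = A -> pdmx A -> 0 < m ->
  Lk Q A m 1 <= Lk Q A m K.+1.
Proof.
move=> n0 sQ pQ sA pA m0; rewrite /Lk.
have sym c : (Q + c *: A)^T = Q + c *: A by rewrite linearD linearZ /= sQ sA.
have qf c h : dot h ((Q + c *: A) *m h) = dot h (Q *m h) + c * dot h (A *m h).
  by rewrite mulmxDl -scalemxAl dotDr dotZr.
apply: sigma_max_mono => //.
  move=> h; rewrite qf; have := pQ h; have := pd_psd pA h.
  have : 0 <= m * (4 * 1%:R - 2) by rewrite mulr1; lra.
  move=> c0 a0 q0; have := mulr_ge0 c0 a0; lra.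
move=> h; rewrite !qf lerD2l ler_wpM2r //; first exact: pd_psd.
have : 0 <= K%:R :> R by [].
rewrite -addn1 natrD mulr1 ler_pM2l //; move=> K0; lra.
Qed.

Lemma bscalar (g sA sm L1 W NG WG dAw rA : R) :
  0 < g -> g * L1 <= 1 -> 0 <= sA -> 0 <= sm -> 0 <= W -> 0 < NG -> 0 <= L1 ->
  dAw <= sA * W -> W * NG <= 2 * rA * L1 * WG -> rA = Num.sqrt sm / sA ->
  2 * Num.sqrt sm <= NG -> (W = 0 -> WG = 0) -> g * dAw <= WG.
Proof.
move=> g0 gL1 sA0 sm0 W0 NG0 L10 f1 rq rAe NGs Wz.
have ss : 0 <= Num.sqrt sm := sqrtr_ge0 sm.
have rA0 : 0 <= rA by rewrite rAe (divr_ge0 ss sA0).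
have WG0 : 0 <= WG.
  rewrite leNgt; apply/negP => WGn.
  have H : W * NG <= 0.
    apply: le_trans rq _; rewrite mulr_ge0_le0 ?mulr_ge0 //; exact: ltW.
  have W00 : W = 0.
    by apply/eqP; rewrite eq_le W0 andbT -(pmulr_rle0 _ NG0) mulrC.
  by move: WGn; rewrite (Wz W00) ltxx.
have [sAz|sApos] := eqVneq sA 0.
  by apply: le_trans (ler_wpM2l (ltW g0) f1) _; rewrite sAz mul0r mulr0.
have sAp : 0 < sA by rewrite lt_def sApos sA0.
have rAe' : sA * rA = Num.sqrt sm by rewrite rAe mulrCA divff // mulr1.
have c1 : g * sA * W * NG <= 2 * Num.sqrt sm * (g * L1) * WG.
  have := ler_wpM2l (mulr_ge0 (ltW g0) sA0) rq.
  rewrite -rAe'.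
  have -> : g * sA * W * NG = g * sA * (W * NG) by ring.
  by have -> : 2 * (sA * rA) * (g * L1) * WG = g * sA * (2 * rA * L1 * WG) by ring.
have c2 : 2 * Num.sqrt sm * (g * L1) * WG <= NG * WG.
  have h1 := ler_wpM2l (mulr_ge0 (ler0n _ 2) ss) gL1.
  rewrite mulr1 in h1; by rewrite ler_wpM2r // (le_trans h1 NGs).
have c3 : g * sA * W <= WG.
  by rewrite -(ler_pM2r NG0) [WG * NG]mulrC (le_trans c1 c2).
apply: le_trans (ler_wpM2l (ltW g0) f1) _; by rewrite mulrA.
Qed.

Lemma sigma_max_ge0 (M : 'M[R]_n) : 0 <= sigma_max M.
Proof. exact: sqrtr_ge0. Qed.

Lemma Lk_ge0 (Q A : 'M[R]_n) m k : 0 <= Lk Q A m k.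
Proof. exact: sigma_max_ge0. Qed.

Lemma boundary Q A q v m K gamma (b : 'cV[R]_n) :
  Q^T = Q -> psdmx Q -> A^T = A -> pdmx A -> 0 < m -> requirement2 Q A q v m ->
  0 < gamma -> gamma * Lk Q A m K.+1 <= 1 -> (0 < n)%N ->
  gfun A v b = 1 ->
  gfun A v (b - gamma *: gradJ Q A q v m K.+1 b) <= 1.
Proof.
move=> sQ pQ sA pA m0 req g0 gL n0 gb1.
set u := b - v.
have gb : dot u (A *m u) = 1 by [].
have -> : gradJ Q A q v m K.+1 b = gradf Q q b + m *: gradg A v b.
  by rewrite /gradJ /= gb1 expr1n mulr1.
have := req b gb1; rewrite /=.
set w := gradf Q q b + m *: gradg A v b; set G := gradg A v b => rq.
have eq : b - gamma *: w - v = 1 *: u + (- gamma) *: w.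
  by rewrite /u scale1r scaleNr addrAC.
rewrite /gfun eq quad_expand // gb.
have WG : dot w G = 2 * dot u (A *m w) by rewrite /G /gradg dotZr (dot_sym w A u sA).
suff key : gamma * dot w (A *m w) <= dot w G.
  rewrite WG in key.
  have -> : 1 ^+ 2 * 1 + 2 * 1 * - gamma * dot u (A *m w) + (- gamma) ^+ 2 * dot w (A *m w)
     = 1 - gamma * (2 * dot u (A *m w) - gamma * dot w (A *m w)) by ring.
  by rewrite gerBl mulr_ge0 ?subr_ge0 // ltW.
set W := dot w w; set NG := vnorm G; set sA' := sigma_max A; set sm := sigma_min A.
have f1 : dot w (A *m w) <= sA' * W := sigma_max_bound sA w.
rewrite vnorm_sq -/W -/NG in rq.
have GG : dot G G = 4 * dot (A *m u) (A *m u).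
  by rewrite /G /gradg dotZl dotZr mulrA; congr (_ * _); rewrite -natrM.
have f3 : sm <= dot (A *m u) (A *m u).
  by have := sigma_min_bound sA (pd_psd pA) u; rewrite gb mulr1.
have sm0 : 0 <= sm by apply: sigma_min_ge0.
have Au0 : 0 < dot (A *m u) (A *m u).
  rewrite lt_def dot_ge0 dot_eq0 andbT; apply/eqP => Au.
  by move: gb; rewrite Au dot0r => /eqP; rewrite eq_sym oner_eq0.
have NG0 : 0 < NG by rewrite /NG /vnorm sqrtr_gt0 GG mulr_gt0.
have ss : 0 <= Num.sqrt sm := sqrtr_ge0 sm.
have NGs : 2 * Num.sqrt sm <= NG.
  have a0 : 0 <= 2 * Num.sqrt sm by rewrite mulr_ge0.
  have b0 : 0 <= NG := vnorm_ge0 G.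
  have nn1 : 2 * Num.sqrt sm \is Num.nneg by rewrite nnegrE.
  have nn2 : NG \is Num.nneg by rewrite nnegrE.
  rewrite -(ler_pXn2r (isT : (0 < 2)%N) nn1 nn2).
  rewrite exprMn sqr_sqrtr // /NG vnorm_sq GG.
  have -> : (2 : R) ^+ 2 = 4 by rewrite expr2 -natrM.
  by rewrite ler_wpM2l.
have L1k := @Lk_mono Q A m K n0 sQ pQ sA pA m0.
have L10 := Lk_ge0 Q A m 1.
have gL1 : gamma * Lk Q A m 1 <= 1 := le_trans (ler_wpM2l (ltW g0) L1k) gL.
have sA0 : 0 <= sA' := sigma_max_ge0 A.
have W0 : 0 <= W by apply: dot_ge0.
have Wz : W = 0 -> dot w G = 0.
  by move/eqP; rewrite dot_eq0 => /eqP ->; rewrite dot0l.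
exact: (bscalar _ _ _ _ _ _ _ _ _ g0 gL1 sA0 sm0 W0 NG0 L10 f1 rq erefl NGs Wz).
Qed.
End Boundary.

Section MainSec.
Variables (R : realType) (n : nat).

Lemma root_lemma (g al be : R) : 0 <= g <= 1 -> 0 < al ->
  exists s, 0 <= s /\ g + 2 * s * be + s ^+ 2 * al = 1.
Proof.
move=> /andP[g0 g1] al0.
set D := be ^+ 2 + al * (1 - g).
have D0 : be ^+ 2 <= D by rewrite /D lerDl mulr_ge0 // ?subr_ge0 // ltW.
set r := Num.sqrt D.
have rD : r ^+ 2 = D by rewrite sqr_sqrtr // (le_trans (sqr_ge0 be) D0).
have rb : be <= r.
  rewrite /r; apply: le_trans (ler_norm be) _; rewrite -sqrtr_sqr ler_sqrt //.
  exact: le_trans (sqr_ge0 be) D0.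
exists ((r - be) / al); split; first by rewrite divr_ge0 ?subr_ge0 // ltW.
have aln : al != 0 by rewrite gt_eqF.
apply/eqP; rewrite -subr_eq0.
have -> : g + 2 * ((r - be) / al) * be + ((r - be) / al) ^+ 2 * al - 1
   = (r ^+ 2 - (be ^+ 2 + al * (1 - g))) / al by field.
by rewrite rD subrr mul0r.
Qed.

Lemma vec_id1 (x v p : 'cV[R]_n) s : x + s *: p - v = 1 *: (x - v) + s *: p.
Proof. by apply/matrixP => i j; rewrite !mxE; ring. Qed.

Lemma vec_id2 (x v p d1 d2 : 'cV[R]_n) s gamma :
  (x + s *: p) - gamma *: d1 - v - (x - gamma *: d2 - v) = s *: p - gamma *: (d1 - d2).
Proof. by apply/matrixP => i j; rewrite !mxE; ring. Qed.

Lemma vec_id3 (x v p : 'cV[R]_n) s : x + s *: p - v - (x - v) = s *: p.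
Proof. by apply/matrixP => i j; rewrite !mxE; ring. Qed.

Lemma final_scalar (E Rb Eb : R) : 0 < E -> E <= Rb -> Rb ^+ 2 <= Eb * E -> Eb <= 1 -> E <= 1.
Proof.
move=> E0 ER RE Eb1.
have : E * E <= 1 * E.
  apply: le_trans (_ : Rb ^+ 2 <= _); last first.
    by apply: le_trans RE _; rewrite ler_wpM2r // ltW.
  by rewrite expr2 ler_pM // ltW.
by rewrite ler_pM2r.
Qed.

Lemma key_scalar (s g L DP PP : R) : 0 <= s -> 0 < g -> 0 <= PP -> g * L <= 1 -> 0 <= L ->
  s * DP <= L * (s * (s * PP)) -> (s = 0 -> DP = 0) -> 0 <= s * PP - g * DP.
Proof.
move=> s0 g0 PP0 gL L0 sm sz; have [sz0|snz] := eqVneq s 0.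
  by rewrite (sz sz0) sz0 mulr0 mul0r subrr.
have sp : 0 < s by rewrite lt_def snz s0.
have h1 : DP <= L * (s * PP).
  by rewrite -(ler_pM2l sp) (le_trans sm) // mulrCA.
have h2 : g * DP <= g * L * (s * PP) by rewrite -mulrA ler_wpM2l // ltW.
have h3 : g * L * (s * PP) <= s * PP.
  by rewrite -[X in _ <= X]mul1r ler_wpM2r // mulr_ge0.
by rewrite subr_ge0 (le_trans h2 h3).
Qed.

End MainSec.

Theorem proposition2 (R : realType) (n : nat)
  (Q A : 'M[R]_n) (q v : 'cV[R]_n) (m : R) (k : nat) (gamma : R) (x : 'cV[R]_n) :
  is_symmetric Q -> psdmx Q -> is_symmetric A -> pdmx A ->
  0 < m -> requirement2 Q A q v m ->
  (0 < k)%N -> 0 < gamma -> gamma <= 1 / Lk Q A m k ->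
  inC A v x -> inC A v (x - gamma *: gradJ Q A q v m k x).
Proof.
rewrite /is_symmetric => sQ pQ sA pA m0 req k0 g0 gL xC.
have [n0|n0] : (n = 0)%N \/ (0 < n)%N by case: n {Q A q v x sQ pQ sA pA req xC gL}; [left|right].
  rewrite /inC /gfun dotE big1 // => i _.
  exfalso; have := ltn_ord i; move: (nat_of_ord i) => j; by rewrite n0.
case: k k0 gL => // K _ gL.
have Lkp : 0 < Lk Q A m K.+1.
  rewrite lt_def Lk_ge0 andbT; apply/eqP => L0; move: gL; rewrite L0 invr0 mulr0.
  by rewrite leNgt g0.
have gL' : gamma * Lk Q A m K.+1 <= 1.
  by have := ler_wpM2r (ltW Lkp) gL; rewrite mul1r mulVf // gt_eqF.
set yx := x - v.
have gx1 : dot yx (A *m yx) <= 1 := xC.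
have gx0 : 0 <= dot yx (A *m yx) := pd_psd pA yx.
rewrite /inC /gfun.
set e := x - gamma *: gradJ Q A q v m K.+1 x - v.
have [e0|enz] := eqVneq e 0; first by rewrite e0 dot0l ler01.
have E0 : 0 < dot e (A *m e) := pA e enz.
set p := A *m e.
have pnz : p != 0.
  by apply/eqP => p0; move: E0; rewrite -/p p0 dot0r ltxx.
have al0 : 0 < dot p (A *m p) := pA p pnz.
have [s [s0 gs]] := @root_lemma R (dot yx (A *m yx)) (dot p (A *m p)) (dot yx (A *m p))
  ltac:(by rewrite gx0) al0.
set b := x + s *: p.
have gb : gfun A v b = 1.
  by rewrite /gfun /b vec_id1 quad_expand // -/yx expr1n !mul1r mulr1.
have gb' : dot (b - v) (A *m (b - v)) <= 1 by move: gb; rewrite /gfun => ->.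
have bnd := @boundary R n Q A q v m K gamma b sQ pQ sA pA m0 req g0 gL' n0 gb.
set eb := b - gamma *: gradJ Q A q v m K.+1 b - v.
have Eb1 : dot eb (A *m eb) <= 1 := bnd.
have smo := @smooth R n Q A q v m K yx (b - v) sQ sA pA m0 gx1 gb'.
set D := gJ Q A q v m K (b - v) - gJ Q A q v m K yx.
have ee : eb - e = s *: p - gamma *: D.
  by rewrite /eb /e /D /yx !gradJ_gJ /b vec_id2.
have hb : (b - v) - yx = s *: p by rewrite /b /yx vec_id3.
rewrite hb !dotZr !dotZl in smo.
have key : 0 <= dot (eb - e) p.
  rewrite ee dotBl !dotZl; apply: (@key_scalar R s gamma (Lk Q A m K.+1)) => //.
  - exact: dot_ge0.
  - exact: Lk_ge0.
  - move=> sz; rewrite /D /b sz scale0r addr0 -/yx subrr dot0l //.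
have ER : dot e p <= dot eb p.
  by rewrite -subr_ge0 -dotBl.
have CS := @cs_A R n A eb e sA pA.
exact: (@final_scalar R _ _ _ E0 ER CS Eb1).
Qed.
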